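(* Let $(G,k,d)$ be an instance of \textsc{Contraction(vc)} such that $G$ is connected, $k<\mathrm{rank}(G)$ and $2d\le k$. Then $(G,k,d)$ is a Yes-instance if and only if $d<\mathrm{vc}(G)$.
   Context: All graphs are finite, simple and undirected. $\mathrm{vc}(G)$ denotes the minimum size of a vertex cover of $G$. For an edge $e=uv$, $G/e$ is obtained from $G$ by deleting $u$ and $v$ and adding a new vertex adjacent to every vertex of $(N(u)\cup N(v))\setminus\{u,v\}$ (no loops or parallel edges are created); for $F\subseteq E(G)$, $G/F$ denotes the graph obtained by contracting all edges of $F$. $\mathrm{rank}(G)$ is $|V(G)|$ minus the number of connected components of $G$. An instance $(G,k,d)$ of \textsc{Contraction(vc)} (graph $G$, non-negative integers $k,d$) is a Yes-instance iff there exists $F\subseteq E(G)$ with $|F|\le k$ and $\mathrm{vc}(G/F)\le \mathrm{vc}(G)-d$. *)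

(* Defs.v *)
(* A simple graph G is a finType T of vertices with a
   symmetric irreflexive adjacency relation e : rel T. *)
From mathcomp Require Import all_boot.
Set Implicit Arguments. Unset Strict Implicit. Unset Printing Implicit Defensive.

Section Graphs.
Variable T : finType.

Definition is_vcover (V : {set T}) (E : rel T) (S : {set T}) : bool :=
  (S \subset V) &&
  [forall x in V, forall y in V, E x y ==> (x \in S) || (y \in S)].

(* minimum size of a vertex cover (V itself is always a cover) *)
Definition vc_on (V : {set T}) (E : rel T) : nat :=
  #|[arg min_(S < V | is_vcover V E S) #|S|]|.

Definition edges (e : rel T) : {set {set T}} :=
  [set [set x; y] | x in T, y in T & e x y].

Definition components (r : rel T) : {set {set T}} :=
  [set [set y | connect r x y] | x in T].

Definition rank (e : rel T) : nat := #|T| - #|components e|.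

Definition frel (F : {set {set T}}) : rel T := fun x y => [set x; y] \in F.

End Graphs.

(* G/F: vertices are the components of (V(G), F); two distinct such
   classes are adjacent iff some edge of G joins them. *)
Definition contr_vertices (T : finType) (F : {set {set T}}) : {set {set T}} :=
  components (frel F).

Definition contr_adj (T : finType) (e : rel T) : rel {set T} :=
  fun A B => (A != B) && [exists x in A, exists y in B, e x y].

Definition vc (T : finType) (e : rel T) : nat := vc_on [set: T] e.

Definition vc_contr (T : finType) (e : rel T) (F : {set {set T}}) : nat :=
  vc_on (contr_vertices F) (contr_adj e).

Definition contraction_vc_yes (T : finType) (e : rel T) (k d : nat) : Prop :=
  exists F : {set {set T}},
    [/\ F \subset edges e, #|F| <= k & vc_contr e F + d <= vc e].

(* Main.v *)
Require Import Defs.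
From mathcomp Require Import all_boot zify.
Set Implicit Arguments. Unset Strict Implicit. Unset Printing Implicit Defensive.

Lemma vcover_full (T : finType) (V : {set T}) E : is_vcover V E V.
Proof.
apply/andP; split; first exact: subxx.
by apply/forall_inP => x Hx; apply/forall_inP => y Hy; rewrite Hx implybT.
Qed.

Lemma vc_on_le (T : finType) (V : {set T}) E C : is_vcover V E C -> vc_on V E <= #|C|.
Proof. by rewrite /vc_on; case: arg_minnP => [|S _ H]; [exact: vcover_full | exact: H]. Qed.

Lemma vc_on_spec (T : finType) (V : {set T}) E :
  exists S, is_vcover V E S /\ vc_on V E = #|S|.
Proof. by rewrite /vc_on; case: arg_minnP => [|S HS _]; [exact: vcover_full | exists S]. Qed.

Lemma cross (T : finType) (R : rel T) (Z : {set T}) x0 y :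
  x0 \in Z -> connect R x0 y -> y \notin Z ->
  exists x y', [/\ x \in Z, y' \notin Z & R x y'].
Proof.
move=> Hx0 /connectP [p Hp ->].
elim: p x0 Hx0 Hp => [|a p IH] x0 Hx0 /=; first by rewrite Hx0.
case/andP=> Ha Hp Hl.
case: (boolP (a \in Z)) => Haz; first exact: IH Haz Hp Hl.
by exists x0, a.
Qed.

Lemma edges_mem (T : finType) (e : rel T) x y : e x y -> [set x; y] \in edges e.
Proof. by move=> H; apply/imset2P; exists x y; rewrite ?inE. Qed.

Definition cl (T : finType) (F : {set {set T}}) (v : T) : {set T} :=
  [set y | connect (Defs.frel F) v y].

Lemma frel_sym (T : finType) (F : {set {set T}}) : symmetric (Defs.frel F).
Proof. by move=> x y; rewrite /Defs.frel setUC. Qed.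

Lemma cl_eq (T : finType) (F : {set {set T}}) x y :
  connect (Defs.frel F) x y -> cl F x = cl F y.
Proof.
move=> H; apply/setP => z; rewrite !inE.
by rewrite (same_connect (sym_connect_sym (@frel_sym T F)) H).
Qed.

Lemma cl_mono (T : finType) (F F' : {set {set T}}) a b :
  F \subset F' -> connect (Defs.frel F) a b -> connect (Defs.frel F') a b.
Proof.
move=> sFF'; apply: connect_sub => u v H; apply: connect1.
by rewrite /Defs.frel (subsetP sFF' _ H).
Qed.

Lemma cl_step (T : finType) (F F' : {set {set T}}) r x s :
  F \subset F' -> x \in cl F r -> [set x; s] \in F' -> s \in cl F' r.
Proof.
rewrite /cl !inE => sFF' Hx Hs.
apply: connect_trans (cl_mono sFF' Hx) _; exact: connect1.
Qed.

Lemma grow (T : finType) (e : rel T) (S Z : {set T}) r s0 :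
  (forall x y, e x y -> (x \in S) || (y \in S)) ->
  (forall x y : T, connect e x y) ->
  r \in Z -> s0 \in S -> s0 \notin Z ->
  (exists x s, [/\ x \in Z, s \in S, s \notin Z & e x s]) \/
  (exists x y s, [/\ x \in Z, s \in S, s \notin Z, e x y & e y s]).
Proof.
move=> Hcov Hcon Hr Hs0 Hs0Z.
pose A := Z :|: [set y | [exists z in Z, e z y]].
have HrA : r \in A by rewrite inE Hr.
case: (boolP (s0 \in A)) => Hs0A.
  left; move: Hs0A; rewrite !inE (negbTE Hs0Z) /= => /exists_inP [z Hz Hzs].
  by exists z, s0.
have [a [b [HaA HbA Hab]]] := cross HrA (Hcon r s0) Hs0A.
move: HaA HbA; rewrite !inE negb_or => /orP [HaZ | /exists_inP [z Hz Hza]] /andP [HbZ Hb].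
  by move: Hb; rewrite negb_exists_in => /forall_inP /(_ a HaZ); rewrite Hab.
have HaZ : a \notin Z.
  apply/negP => HaZ; move: Hb; rewrite negb_exists_in => /forall_inP /(_ a HaZ).
  by rewrite Hab.
case/orP: (Hcov a b Hab) => [HaS | HbS].
  by left; exists z, a.
by right; exists z, a, b.
Qed.

Lemma build (T : finType) (e : rel T) (S : {set T}) r d :
  (forall x y, e x y -> (x \in S) || (y \in S)) ->
  (forall x y : T, connect e x y) ->
  r \in S -> d < #|S| ->
  forall j, j <= d -> exists F : {set {set T}},
    [/\ F \subset edges e, #|F| <= 2 * j & j.+1 <= #|S :&: cl F r|].
Proof.
move=> Hcov Hcon Hr Hd; elim=> [|j IH] Hj.
  exists set0; rewrite sub0set cards0; split=> //.
  by apply/card_gt0P; exists r; rewrite !inE Hr connect0.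
have [F [HFe HFc HFS]] := IH (ltnW Hj).
set Z := cl F r in HFS.
case: (boolP (S \subset Z)) => HSZ.
  exists F; split=> //; first by rewrite mulnS; apply: leq_trans HFc (leq_addl _ _).
  by rewrite (setIidPl HSZ); apply: leq_ltn_trans Hj Hd.
have [s0 Hs0 Hs0Z] : exists2 s0, s0 \in S & s0 \notin Z.
  by move/subsetPn: HSZ => [s0 H1 H2]; exists s0.
have HrZ : r \in Z by rewrite inE connect0.
have key : forall (F' : {set {set T}}) s, F \subset F' -> s \in S -> s \notin Z -> s \in cl F' r ->
    j.+2 <= #|S :&: cl F' r|.
  move=> F' s sFF' Hs HsZ HsF'.
  apply: leq_trans (_ : #|s |: (S :&: Z)| <= _).
    by rewrite cardsU1 inE (negbTE HsZ) andbF.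
  apply: subset_leq_card; apply/subsetP => v; rewrite in_setU1 in_setI => /orP [/eqP -> | /andP [Hv HvZ]].
    by rewrite in_setI Hs HsF'.
  rewrite in_setI Hv /=; move: HvZ; rewrite /Z /cl !inE; exact: cl_mono.
case: (grow Hcov Hcon HrZ Hs0 Hs0Z) => [[x [s [HxZ HsS HsZ Hxs]]] | [x [y [s [HxZ HsS HsZ Hxy Hys]]]]].
  exists ([set x; s] |: F); split.
  - by rewrite subUset sub1set edges_mem.
  - rewrite cardsU1 mulnS; apply: leq_trans (leq_add (leq_b1 _) HFc) _.
    lia.
  - apply: (key _ s) => //; first exact: subsetUr.
    by apply: (cl_step (subsetUr _ _) HxZ); rewrite setU11.
exists ([set y; s] |: ([set x; y] |: F)); split.
- by rewrite !subUset !sub1set !edges_mem.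
- rewrite cardsU1 cardsU1 mulnS.
  apply: leq_trans (leq_add (leq_b1 _) (leq_add (leq_b1 _) HFc)) _.
  lia.
- have s1 : F \subset [set x; y] |: F by exact: subsetUr.
  have s2 : [set x; y] |: F \subset [set y; s] |: ([set x; y] |: F) by exact: subsetUr.
  apply: (key _ s) => //; first exact: subset_trans s1 s2.
  have Hy : y \in cl ([set x; y] |: F) r by apply: (cl_step s1 HxZ); rewrite setU11.
  by apply: (cl_step s2 Hy); rewrite setU11.
Qed.

Lemma cl_mem (T : finType) (F : {set {set T}}) x : x \in cl F x.
Proof. by rewrite inE connect0. Qed.

Lemma cl_in (T : finType) (F : {set {set T}}) x : cl F x \in contr_vertices F.
Proof. by apply/imsetP; exists x. Qed.

Lemma cl_of (T : finType) (F : {set {set T}}) A :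
  A \in contr_vertices F -> exists a, A = cl F a.
Proof. by case/imsetP => a _ ->; exists a. Qed.

Lemma cl_memE (T : finType) (F : {set {set T}}) a x : x \in cl F a -> cl F x = cl F a.
Proof. by rewrite inE => H; symmetry; apply: cl_eq. Qed.

Lemma contr_cover (T : finType) (e : rel T) (F : {set {set T}}) (S : {set T}) :
  (forall x y, e x y -> (x \in S) || (y \in S)) ->
  is_vcover (contr_vertices F) (contr_adj e) (cl F @: S).
Proof.
move=> Hcov; apply/andP; split.
  by apply/subsetP => A /imsetP [x _ ->]; exact: cl_in.
apply/forall_inP => A HA; apply/forall_inP => B HB; apply/implyP.
case/andP=> _ /exists_inP [x HxA /exists_inP [y HyB Hxy]].
have [a Ha] := cl_of HA; have [b Hb] := cl_of HB; subst A B.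
case/orP: (Hcov x y Hxy) => H.
  by rewrite -(cl_memE HxA) (imset_f _ H).
by rewrite -(cl_memE HyB) (imset_f _ H) orbT.
Qed.

Lemma cover_size (T : finType) (F : {set {set T}}) (S : {set T}) r :
  #|cl F @: S| <= #|S| - #|S :&: cl F r| + 1.
Proof.
rewrite -{1}(setID S (cl F r)) imsetU.
apply: leq_trans (leq_card_setU _ _) _.
rewrite addnC -cardsD; apply: leq_add.
  exact: leq_imset_card.
apply: leq_trans (_ : #|[set cl F r]| <= 1); last by rewrite cards1.
apply: subset_leq_card; apply/subsetP => A /imsetP [v /setIP [_ Hv] ->].
by rewrite inE (cl_memE Hv).
Qed.

Lemma span_grow (T : finType) (F : {set {set T}}) :
  (forall a b, connect (Defs.frel F) a b) ->
  forall m, m < #|T| -> exists (Z : {set T}) (E : {set {set T}}),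
    [/\ #|Z| = m.+1, E \subset F, #|E| = m & forall f, f \in E -> f \subset Z].
Proof.
move=> Hc; elim=> [|m IH] Hm.
  have [r _] := card_gt0P Hm.
  exists [set r], set0; split; rewrite ?cards1 ?cards0 ?sub0set //.
  by move=> f; rewrite inE.
have [Z [E [HZ HEF HE HEZ]]] := IH (ltnW Hm).
have [y0 Hy0] : exists y0, y0 \in ~: Z.
  apply/card_gt0P; move: (cardsC Z); rewrite HZ; lia.
have [x0 Hx0] : exists x0, x0 \in Z by apply/card_gt0P; rewrite HZ.
rewrite inE in Hy0.
have [x [y [HxZ HyZ Hxy]]] := cross Hx0 (Hc x0 y0) Hy0.
exists (y |: Z), ([set x; y] |: E); split.
- by rewrite cardsU1 HyZ HZ.
- by rewrite subUset sub1set HEF andbT; exact: Hxy.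
- rewrite cardsU1 HE; case: (boolP ([set x; y] \in E)) => // H.
  by move: (subsetP (HEZ _ H) y); rewrite !inE eqxx orbT (negbTE HyZ) => /(_ isT).
- move=> f; rewrite in_setU1 => /orP [/eqP -> | Hf].
    by apply/subsetP => v; rewrite !inE => /orP [/eqP -> | /eqP ->]; rewrite ?eqxx ?HxZ ?orbT.
  by apply: subset_trans (HEZ _ Hf) (subsetUr _ _).
Qed.

Lemma span_card (T : finType) (F : {set {set T}}) :
  (forall a b, connect (Defs.frel F) a b) -> #|T| <= #|F| + 1.
Proof.
move=> Hc; case: (posnP #|T|) => [-> //| HT].
have Hlt : #|T|.-1 < #|T| by rewrite prednK.
have [Z [E [_ HEF HE _]]] := span_grow Hc Hlt.
have := subset_leq_card HEF; rewrite HE; lia.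
Qed.

Theorem mainTheorem6 (T : finType) (e : rel T) (k d : nat) :
  symmetric e -> irreflexive e ->
  (forall x y : T, connect e x y) ->
  k < rank e -> 2 * d <= k ->
  (contraction_vc_yes e k d <-> d < vc e).
Proof.
move=> Hsym Hirr Hcon Hk Hdk.
have [S [HS HSc]] := vc_on_spec [set: T] e.
have Hcov : forall x y, e x y -> (x \in S) || (y \in S).
  move=> x y Hxy; case/andP: HS => _ /forall_inP /(_ x (in_setT x)).
  by move/forall_inP/(_ y (in_setT y))/implyP/(_ Hxy).
rewrite /vc -/(vc_on _ _) HSc; split.
- case=> F [HFe HFk HFv]; rewrite ltnNge; apply/negP => HSd.
  have Hv0 : vc_contr e F = 0 by move: HFv HSd; rewrite /vc /vc_on -/(vc_on _ _) HSc; lia.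
  have HTpos : 0 < #|T| by move: Hk; rewrite /rank; lia.
  have Hcomp : 0 < #|components e|.
    have [r _] := card_gt0P HTpos; apply/card_gt0P.
    by exists [set y | connect e r y]; apply/imsetP; exists r.
  have HF2 : #|F| + 2 <= #|T| by move: Hk HFk; rewrite /rank; lia.
  case: (boolP [forall a, forall b, connect (Defs.frel F) a b]) => Hall.
    have : #|T| <= #|F| + 1.
      by apply: span_card => a b; move/forallP/(_ a)/forallP/(_ b): Hall.
    lia.
  move/forallPn: Hall => [a /forallPn [b Hab]].
  have Hb : b \notin cl F a by rewrite inE.
  have [x [y [Hx Hy Hxy]]] := cross (cl_mem F a) (Hcon a b) Hb.
  have [C [HC HCc]] := vc_on_spec (contr_vertices F) (contr_adj e).
  move: Hv0; rewrite /vc_contr HCc => /cards0_eq HC0; subst C.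
  case/andP: HC => _ /forall_inP /(_ _ (cl_in F x)) /forall_inP /(_ _ (cl_in F y)).
  rewrite !inE orbF /contr_adj; apply/negP; rewrite negb_imply; apply/andP; split=> //.
  apply/andP; split.
    apply/eqP => Heq; move: Hy; rewrite -(cl_memE Hx) Heq cl_mem //.
  by apply/exists_inP; exists x; rewrite ?cl_mem //; apply/exists_inP; exists y; rewrite ?cl_mem.
- move=> HdS.
  have [r Hr] : exists r, r \in S by apply/card_gt0P; lia.
  have [F [HFe HFc HFS]] := build Hcov Hcon Hr HdS (leqnn d).
  exists F; split => //; first exact: leq_trans HFc Hdk.
  have H1 := vc_on_le (contr_cover F Hcov).
  have H2 := cover_size F S r.
  have H3 : #|S :&: cl F r| <= #|S| by apply: subset_leq_card; apply: subsetIl.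
  have H4 : #|cl F @: S| + d <= #|S| by lia.
  have -> : vc e = #|S| by exact: HSc.
  apply: (@leq_trans (#|cl F @: S| + d)) H4; rewrite leq_add2r; exact: H1.
Qed.
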